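(* Fix a finite extensive-form game with perfect recall and any sequence of joint normal-form plans $\pi^1,\dots,\pi^T\in\Pi$. Then the empirical frequency of play $\bar\mu^T$ satisfies \[ \delta(\bar\mu^T)=\max_{i\in\mathcal P}\ \max_{\sigma=(I,a)\in\Sigma_i\setminus\{\varnothing_i\}}\frac{R^T_\sigma}{T}. \] Consequently, $\bar\mu^T$ is an $\epsilon$-EFCE with $\epsilon=\max_{i\in\mathcal P}\max_{\sigma}R^T_\sigma/T$. That is, for every player $i$, every $\sigma=(I,a)$ and every $\hat\mu_i\in\Delta_{\Pi_i(I)}$, \[ \sum_{z\in Z(I,a)}q_{\bar\mu^T}(z)u_i(z)\ \ge\ \sum_{z\in Z(I)}p^\sigma_{\bar\mu^T,\hat\mu_i}(z)u_i(z)-\epsilon . \]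
   Context: Setting: a finite extensive-form game (game tree) with a set of players $\mathcal P$ and a chance player $c$ with fixed known action probabilities. $Z$ is the set of terminal nodes (leaves), $u_i:Z\to\mathbb R$ is player $i$'s payoff, and $p_c(z)$ is the product of chance probabilities along the root-to-$z$ path. $\mathcal I_i$ is the set of information sets (infosets) of player $i\in\mathcal P$; $A(I)$ is the action set at $I$. The game has perfect recall: all nodes of an infoset $I\in\mathcal I_i$ have the same ordered list of player-$i$ (infoset, action) pairs on their root paths. For $I,J\in\mathcal I_i$, write $I\preceq J$ if some path in the tree goes from a node of $I$ to a node of $J$ (with $I\preceq I$). A normal-form plan is $\pi_i\in\Pi_i=\prod_{I\in\mathcal I_i}A(I)$. Write $\Pi=\prod_{i\in\mathcal P}\Pi_i$ and $\Pi_{-i}=\prod_{j\ne i}\Pi_j$. The sequences of player $i$ are $\Sigma_i=\{(I,a):I\in\mathcal I_i,a\in A(I)\}\cup\{\varnothing_i\}$. $\Pi_i(I)$ is the set of plans $\pi_i$ with $\pi_i(J)=b$ for every player-$i$ pair $(J,b)$ on the root path to $I$. Also $\Pi_i((I,a))=\{\pi_i\in\Pi_i(I):\pi_i(I)=a\}$ and $\Pi_i(\varnothing_i)=\Pi_i$. For $z\in Z$, $\Pi_i(z)$ is the set of plans choosing, at every player-$i$ infoset visited on the root path to $z$, the action taken on that path. Then $\Pi(z)=\prod_i\Pi_i(z)$ and $\Pi_{-i}(z)=\prod_{j\neq i}\Pi_j(z)$. $Z(I)$ is the set of terminal nodes below nodes of $I$; $Z(I,a)\subseteq Z(I)$ consists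 of those whose path takes $a$ at $I$. $\mathcal C(I,a)$ is the set of player-$i$ infosets reachable from a node of $I$ by a path starting with $a$ and not passing through another player-$i$ infoset. Immediate utilities at round $t$: $u_i^t[I,a]=\sum_{z\in Z(I,a)\setminus\bigcup_{J\in\mathcal C(I,a)}Z(J)}\mathbb 1[\pi^t_{-i}\in\Pi_{-i}(z)]\,p_c(z)u_i(z)$. Values: $V_I^t(\pi_i)=u_i^t[I,\pi_i(I)]+\sum_{J\in\mathcal C(I,\pi_i(I))}V_J^t(\pi_i)$, defined recursively. Trigger regret for $\sigma=(I,a)$: $R^T_\sigma=\max_{\hat\pi_i\in\Pi_i(I)}\sum_{t=1}^T\mathbb 1[\pi_i^t\in\Pi_i(\sigma)]\big(V_I^t(\hat\pi_i)-V_I^t(\pi_i^t)\big)$. Empirical frequency: $\bar\mu^T(\pi)=|\{t\le T:\pi^t=\pi\}|/T$. For $\mu\in\Delta_\Pi$, $\sigma=(I,a)$, $\hat\mu_i\in\Delta_{\Pi_i(I)}$, $z\in Z(I)$: \[ p^\sigma_{\mu,\hat\mu_i}(z)=\Big(\sum_{\pi_i\in\Pi_i(\sigma),\,\pi_{-i}\in\Pi_{-i}(z)}\mu(\pi_i,\pi_{-i})\Big)\Big(\sum_{\hat\pi_i\in\Pi_i(z)}\hat\mu_i(\hat\pi_i)\Big)p_c(z), \] and $q_\mu(z)=\big(\sum_{\pi\in\Pi(z)}\mu(\pi)\big)p_c(z)$. Maximum deviation: \[ \delta(\mu)=\max_{i\in\mathcal P}\max_{\sigma=(I,a)}\Big\{\max_{\hat\mu_i\in\Delta_{\Pi_i(I)}}\sum_{z\in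 Z(I)}p^\sigma_{\mu,\hat\mu_i}(z)u_i(z)-\sum_{z\in Z(I,a)}q_\mu(z)u_i(z)\Big\}. \] An EFCE is a $\mu$ with $\delta(\mu)\le 0$; an $\epsilon$-EFCE is a $\mu$ with $\delta(\mu)\le\epsilon$. *)

(* Defs.v *)
From HB Require Import structures.
From mathcomp Require Import all_boot all_order all_algebra.
From mathcomp Require Import classical_sets reals.
Set Implicit Arguments. Unset Strict Implicit. Unset Printing Implicit Defensive.
Import Order.TTheory GRing.Theory Num.Theory.
Local Open Scope ring_scope.
Local Open Scope classical_set_scope.

(* A finite game tree: leaves carry the payoff vector, chance nodes carry a
   list of (probability, subtree) branches, decision nodes carry their
   information set and a list of (action, subtree) branches. *)
Inductive gtree (Player Info Act R : Type) :=
| Leaf of (Player -> R)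
| Chance of seq (R * gtree Player Info Act R)
| Dec of Info & seq (Act * gtree Player Info Act R).
Arguments Leaf {Player Info Act R}.
Arguments Chance {Player Info Act R}.
Arguments Dec {Player Info Act R}.

Section Game.
Variables (R : realType) (Player Info Act : finType).
Variable (owner : Info -> Player).
Variable (A : Info -> {set Act}).

(* terminal node z: the ordered list of (infoset, action) decisions on the
   root-to-z path (root first), the chance reach probability p_c(z), and
   the payoff vector u(z). *)
Record leaf := Mkleaf { hist : seq (Info * Act); pc : R; pay : Player -> R }.

Fixpoint leaves (t : gtree Player Info Act R) : seq leaf :=
  match t with
  | Leaf u => [:: Mkleaf [::] 1 u]
  | Chance cs => flatten [seq [seq Mkleaf (hist z) (c.1 * pc z) (pay z)
                              | z <- leaves c.2] | c <- cs]
  | Dec I0 cs => flatten [seq [seq Mkleaf ((I0, c.1) :: hist z) (pc z) (pay z)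
                              | z <- leaves c.2] | c <- cs]
  end.

(* decision nodes: (infoset of the node, decisions on the root path to it). *)
Fixpoint dnodes (t : gtree Player Info Act R) : seq (Info * seq (Info * Act)) :=
  match t with
  | Leaf _ => [::]
  | Chance cs => flatten [seq dnodes c.2 | c <- cs]
  | Dec I0 cs => (I0, [::]) :: flatten [seq [seq (n.1, (I0, c.1) :: n.2)
                                          | n <- dnodes c.2] | c <- cs]
  end.

Fixpoint wf_tree (t : gtree Player Info Act R) : bool :=
  match t with
  | Leaf _ => true
  | Chance cs => all (fun c => 0 <= c.1) cs && (\sum_(c <- cs) c.1 == 1)
                 && all (fun c => wf_tree c.2) cs
  | Dec I0 cs => perm_eq [seq c.1 | c <- cs] (enum (A I0))
                && all (fun c => wf_tree c.2) cs
  end.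

Definition perfect_recall (t : gtree Player Info Act R) : Prop :=
  forall n1 n2, n1 \in dnodes t -> n2 \in dnodes t -> n1.1 = n2.1 ->
    [seq p <- n1.2 | owner p.1 == owner n1.1]
    = [seq p <- n2.2 | owner p.1 == owner n2.1].

Definition infosets_nonempty (t : gtree Player Info Act R) : Prop :=
  forall I, has (fun n => n.1 == I) (dnodes t).

(* joint normal-form plans Pi = prod_i Pi_i, represented as one action per
   infoset (infosets are partitioned among the players by [owner]). *)
Definition jplan := {f : {ffun Info -> Act} | [forall I, f I \in A I]}.

Definition infos (i : Player) := {I : Info | owner I == i}.
Definition iplan (i : Player) :=
  {f : {ffun infos i -> Act} | [forall J, f J \in A (val J)]}.

Definition restr (i : Player) (p : jplan) : {ffun infos i -> Act} :=
  [ffun J => val p (val J)].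

Section Tree.
Variable t : gtree Player Info Act R.

Definition consistent (i : Player) (f : {ffun infos i -> Act})
    (h : seq (Info * Act)) : bool :=
  [forall J : infos i, forall b : Act, ((val J, b) \in h) ==> (f J == b)].

Definition PiI (i : Player) (f : {ffun infos i -> Act}) (I : infos i) : bool :=
  all (fun n => (n.1 == val I) ==> consistent f n.2) (dnodes t).
Definition Pisig (i : Player) (f : {ffun infos i -> Act}) (I : infos i) (a : Act)
  : bool := PiI f I && (f I == a).
Definition Piz (i : Player) (f : {ffun infos i -> Act}) (z : leaf) : bool :=
  consistent f (hist z).
Definition Pimiz (i : Player) (p : jplan) (z : leaf) : bool :=
  [forall J : Info, forall b : Act,
     ((owner J != i) && ((J, b) \in hist z)) ==> (val p J == b)].
Definition Pijz (p : jplan) (z : leaf) : bool :=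
  [forall J : Info, forall b : Act, ((J, b) \in hist z) ==> (val p J == b)].

Definition inZ (I : Info) (z : leaf) : bool := has (fun q => q.1 == I) (hist z).
Definition inZa (I : Info) (a : Act) (z : leaf) : bool := (I, a) \in hist z.

Fixpoint direct_after (i : Player) (I : Info) (a : Act) (h : seq (Info * Act))
  : bool :=
  match h with
  | [::] => false
  | q :: h' => ((q == (I, a)) && all (fun r => owner r.1 != i) h')
               || direct_after i I a h'
  end.

Definition inC (i : Player) (I : infos i) (a : Act) (J : infos i) : bool :=
  has (fun n => (n.1 == val J) && direct_after i (val I) a n.2) (dnodes t).

Definition uimm (i : Player) (pt : jplan) (I : infos i) (a : Act) : R :=
  \sum_(z <- leaves t | inZa (val I) a z
                        && ~~ [exists J : infos i, inC I a J && inZ (val J) z])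
     (Pimiz i pt z)%:R * pc z * pay z i.

(* V_I^t(pi_i), defined by the recursion of the paper; the recursion along
   C(.,.) has depth at most #|Info|, which is used as fuel. *)
Fixpoint Vfuel (n : nat) (i : Player) (pt : jplan) (I : infos i)
    (f : {ffun infos i -> Act}) : R :=
  match n with
  | 0 => 0
  | n'.+1 => uimm pt I (f I)
             + \sum_(J : infos i | inC I (f I) J) Vfuel n' pt J f
  end.
Definition V (i : Player) (pt : jplan) (I : infos i) (f : {ffun infos i -> Act})
  : R := Vfuel #|Info| pt I f.

Definition regret (T : nat) (pi : 'I_T -> jplan) (i : Player) (I : infos i)
    (a : Act) : R :=
  sup [set x | exists g : iplan i, PiI (val g) I /\
        x = \sum_(s < T) (Pisig (restr i (pi s)) I a)%:R
                         * (V (pi s) I (val g) - V (pi s) I (restr i (pi s)))].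

Definition empfreq (T : nat) (pi : 'I_T -> jplan) : {ffun jplan -> R} :=
  [ffun p => #|[set s | pi s == p]|%:R / T%:R].

Definition is_dist (X : finType) (m : {ffun X -> R}) : Prop :=
  (forall x, 0 <= m x) /\ \sum_x m x = 1.

Definition is_idist (i : Player) (I : infos i) (m : {ffun iplan i -> R}) : Prop :=
  is_dist m /\ forall g, m g != 0 -> PiI (val g) I.

Definition p_sig (mu : {ffun jplan -> R}) (i : Player) (I : infos i) (a : Act)
    (mh : {ffun iplan i -> R}) (z : leaf) : R :=
  (\sum_(p : jplan | Pisig (restr i p) I a && Pimiz i p z) mu p)
  * (\sum_(g : iplan i | Piz (val g) z) mh g) * pc z.

Definition q_mu (mu : {ffun jplan -> R}) (z : leaf) : R :=
  (\sum_(p : jplan | Pijz p z) mu p) * pc z.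

Definition deviation (mu : {ffun jplan -> R}) (i : Player) (I : infos i) (a : Act)
    (mh : {ffun iplan i -> R}) : R :=
  \sum_(z <- leaves t | inZ (val I) z) p_sig mu I a mh z * pay z i
  - \sum_(z <- leaves t | inZa (val I) a z) q_mu mu z * pay z i.

Definition delta (mu : {ffun jplan -> R}) : R :=
  sup [set x | exists (i : Player) (I : infos i) (a : Act) (mh : {ffun iplan i -> R}),
        [/\ a \in A (val I), is_idist I mh & x = deviation mu I a mh]].

Definition max_avg_regret (T : nat) (pi : 'I_T -> jplan) : R :=
  sup [set x | exists (i : Player) (I : infos i) (a : Act),
        a \in A (val I) /\ x = regret pi I a / T%:R].

End Tree.
End Game.

(* Main.v *)
Require Import Defs.
From HB Require Import structures.
From mathcomp Require Import all_boot all_order all_algebra.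
From mathcomp Require Import reals.
From Stdlib Require List.
From mathcomp Require Import zify ring lra.
Import Order.TTheory GRing.Theory Num.Theory.
Set Implicit Arguments. Unset Strict Implicit. Unset Printing Implicit Defensive.
Local Open Scope ring_scope.

Lemma In_mem (T : eqType) (x : T) (s : seq T) : x \in s <-> List.In x s.
Proof.
elim: s => [|y s IH] //=; rewrite in_cons; split.
- by case/orP => [/eqP ->|/IH]; [left|right].
- by case=> [->|/IH ->]; rewrite ?eqxx ?orbT.
Qed.

Lemma In_flatten (T : Type) (x : T) (ss : seq (seq T)) :
  List.In x (flatten ss) <-> exists s, List.In s ss /\ List.In x s.
Proof.
elim: ss => [|s ss IH] /=; first by split=> // [[s []]].
rewrite List.in_app_iff IH; split.
- by case=> [H|[s' [H1 H2]]]; [exists s; split; [left|]|exists s'; split; [right|]].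
- by case=> s' [[<-|H1] H2]; [left|right; exists s'].
Qed.

Lemma In_map (T U : Type) (f : T -> U) (y : U) (s : seq T) :
  List.In y (map f s) <-> exists x, List.In x s /\ y = f x.
Proof.
elim: s => [|x s IH] /=; first by split=> // [[x []]].
rewrite IH; split.
- by case=> [<-|[x' [H ->]]]; [exists x; split; [left|]|exists x'; split; [right|]].
- by case=> x' [[<-|H] ->]; [left|right; exists x'].
Qed.

Section Ind.
Variables (Player Info Act R : Type) (P : gtree Player Info Act R -> Prop).
Hypotheses (HL : forall u, P (Leaf u))
  (HC : forall cs, (forall c, List.In c cs -> P c.2) -> P (Chance cs))
  (HD : forall I cs, (forall c, List.In c cs -> P c.2) -> P (Dec I cs)).

Fixpoint gind (t : gtree Player Info Act R) : P t :=
  let aux := fun (X : Type) =>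
    fix F (l : seq (X * gtree Player Info Act R)) : forall c, List.In c l -> P c.2 :=
      match l with
      | [::] => fun c H => False_ind _ H
      | (x, t0) :: l' => fun c H =>
          match H with
          | or_introl E => eq_ind (x, t0) (fun c => P c.2) (gind t0) c E
          | or_intror H' => F l' c H'
          end
      end in
  match t with
  | Leaf u => HL u
  | Chance cs => HC (aux R cs)
  | Dec I0 cs => HD I0 (aux Act cs)
  end.
End Ind.
Section S.
Variables (R : realType) (Player Info Act : finType) (owner : Info -> Player)
  (A : Info -> {set Act}).
Notation gt := (gtree Player Info Act R).
Implicit Types (t : gt).
Notation lf := (leaf R Player Info Act).

Lemma all_In (T : Type) (p : pred T) s x : all p s -> List.In x s -> p x.
Proof. by elim: s => //= y s IH /andP [py ps] [<-|/IH]; auto. Qed.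


Lemma In_leaves_chance (cs : seq (R * gt)) (z : lf) : List.In z (leaves (Chance cs)) ->
  exists c z', List.In c cs /\ List.In z' (leaves c.2) /\ hist z = hist z'.
Proof.
move=> /= /In_flatten [s [/In_map [c [Hc ->]] /In_map [z' [Hz' ->]]]].
by exists c, z'.
Qed.

Lemma In_leaves_dec I0 (cs : seq (Act * gt)) (z : lf) : List.In z (leaves (Dec I0 cs)) ->
  exists c z', List.In c cs /\ List.In z' (leaves c.2) /\ hist z = (I0, c.1) :: hist z'.
Proof.
move=> /= /In_flatten [s [/In_map [c [Hc ->]] /In_map [z' [Hz' ->]]]].
by exists c, z'.
Qed.

Lemma In_dnodes_chance (cs : seq (R * gt)) n : List.In n (dnodes (Chance cs)) <->
  exists c, List.In c cs /\ List.In n (dnodes c.2).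
Proof.
rewrite /= In_flatten; split.
- by case=> s [/In_map [c [Hc ->]] Hn]; exists c.
- by case=> c [Hc Hn]; exists (dnodes c.2); split=> //; apply/In_map; exists c.
Qed.

Lemma In_dnodes_dec I0 (cs : seq (Act * gt)) n : List.In n (dnodes (Dec I0 cs)) <->
  n = (I0, [::]) \/ exists c n', List.In c cs /\ List.In n' (dnodes c.2) /\
                                 n = (n'.1, (I0, c.1) :: n'.2).
Proof.
rewrite /= In_flatten; split.
- case=> [<-|]; first by left.
  by case=> s [/In_map [c [Hc ->]] /In_map [n' [Hn' ->]]]; right; exists c, n'.
- case=> [->|[c [n' [Hc [Hn' ->]]]]]; first by left.
  right; exists [seq (n.1, (I0, c.1) :: n.2) | n <- dnodes c.2]; split.
    by apply/In_map; exists c.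
  by apply/In_map; exists n'.
Qed.

Lemma leaves_prefix t (z : lf) : List.In z (leaves t) -> forall h1 I a h2,
  hist z = h1 ++ (I, a) :: h2 -> List.In (I, h1) (dnodes t).
Proof.
elim/gind: t z.
- by move=> u z /= [<-|[]] [] //.
- move=> cs IH z /In_leaves_chance [c [z' [Hc [Hz' Eh]]]] h1 I a h2 E.
  apply/In_dnodes_chance; exists c; split=> //.
  by apply: (IH c Hc z' Hz' h1 I a h2); rewrite -Eh.
- move=> I0 cs IH z /In_leaves_dec [c [z' [Hc [Hz' Eh]]]] [|x h1] I a h2; rewrite Eh.
    by case=> -> _ _; apply/In_dnodes_dec; left.
  case=> <- E; apply/In_dnodes_dec; right; exists c, (I, h1); split=> //.
  by split=> //; apply: (IH c Hc z' Hz' h1 I a h2).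
Qed.

Lemma dnodes_prefix t n : List.In n (dnodes t) -> forall h1 I a h2,
  n.2 = h1 ++ (I, a) :: h2 -> List.In (I, h1) (dnodes t).
Proof.
elim/gind: t n.
- by [].
- move=> cs IH n /In_dnodes_chance [c [Hc Hn]] h1 I a h2 E.
  by apply/In_dnodes_chance; exists c; split=> //; apply: (IH c Hc n Hn h1 I a h2).
- move=> I0 cs IH n /In_dnodes_dec [->|[c [n' [Hc [Hn' ->]]]]] [|x h1] I a h2 //=.
    by case=> -> _ _; apply/In_dnodes_dec; left.
  case=> <- E; apply/In_dnodes_dec; right; exists c, (I, h1); split=> //.
  by split=> //; apply: (IH c Hc n' Hn' h1 I a h2).
Qed.

Lemma dnodes_wf t n : wf_tree A t -> List.In n (dnodes t) ->
  forall J b, List.In (J, b) n.2 -> b \in A J.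
Proof.
elim/gind: t n.
- by [].
- move=> cs IH n /= /andP [_ Hall] /In_dnodes_chance [c [Hc Hn]].
  by apply: (IH c Hc n _ Hn); have := all_In Hall Hc.
- move=> I0 cs IH n /= /andP [Hperm Hall] /In_dnodes_dec [->|[c [n' [Hc [Hn' ->]]]]] //=.
  move=> J b [[<- <-]|HJ]; last by apply: (IH c Hc n' _ Hn') =>//; have := all_In Hall Hc.
  have : c.1 \in [seq c.1 | c <- cs].
    by elim: cs Hc {IH Hall Hperm} => //= c0 cs IHc [->|/IHc]; rewrite in_cons ?eqxx // => ->; rewrite orbT.
  by rewrite (perm_mem Hperm) mem_enum.
Qed.
End S.

Section PR.
Variables (R : realType) (Player Info Act : finType) (owner : Info -> Player)
  (A : Info -> {set Act}) (t : gtree Player Info Act R).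
Hypotheses (HA : forall I, A I != set0) (Hwf : wf_tree A t)
  (Hne : infosets_nonempty t) (Hpr : perfect_recall owner t).

Definition own (i : Player) (h : seq (Info * Act)) := [seq p <- h | owner p.1 == i].
Definition node (n : Info * seq (Info * Act)) := List.In n (dnodes t).

Lemma pr I h1 h2 : node (I, h1) -> node (I, h2) -> own (owner I) h1 = own (owner I) h2.
Proof.
move=> H1 H2; have := Hpr (n1 := (I, h1)) (n2 := (I, h2)).
by rewrite !In_mem; apply.
Qed.

Lemma own_cat i h1 h2 : own i (h1 ++ h2) = own i h1 ++ own i h2.
Proof. exact: filter_cat. Qed.
Lemma own_cons_own i x h : owner x.1 = i -> own i (x :: h) = x :: own i h.
Proof. by move=> H; rewrite /own /= H eqxx. Qed.
Lemma own_cons_other i x h : owner x.1 != i -> own i (x :: h) = own i h.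
Proof. by move=> H; rewrite /own /= (negbTE H). Qed.

Lemma no_repeat I h : node (I, h) -> forall h1 b h2, h <> h1 ++ (I, b) :: h2.
Proof.
move=> Hn h1 b h2 E.
have Hn1 : node (I, h1) by apply: (dnodes_prefix Hn); exact: E.
have := pr Hn1 Hn; rewrite E own_cat own_cons_own //.
move/(congr1 size); rewrite size_cat /=; lia.
Qed.

Lemma mem_split (T : eqType) (x : T) s : x \in s -> exists s1 s2, s = s1 ++ x :: s2.
Proof. by case/splitPr => s1 s2; exists s1, s2. Qed.

Lemma notin_node I h b : node (I, h) -> (I, b) \notin h.
Proof.
move=> Hn; apply/negP => /mem_split [s1 [s2 E]]; exact: (no_repeat Hn E).
Qed.

Lemma last_own i h : own i h != [::] ->
  exists h1 x h2, [/\ h = h1 ++ x :: h2, owner x.1 = i & own i h2 = [::]].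
Proof.
elim/last_ind: h => [|h x IH] //; rewrite /own filter_rcons.
case: ifP => /eqP Hx.
  by move=> _; exists h, x, [::]; rewrite cats1; split.
move=> /(IH) [h1 [y [h2 [E Hy H2]]]].
exists h1, y, (rcons h2 x); split=> //; first by rewrite E rcons_cat.
by move: H2; rewrite /own filter_rcons; case: ifP => // /eqP.
Qed.

Lemma first_own i h : own i h != [::] ->
  exists h1 x h2, [/\ h = h1 ++ x :: h2, owner x.1 = i & own i h1 = [::]].
Proof.
elim: h => [|x h IH] //; rewrite /own /=.
case: ifP => /eqP Hx.
  by move=> _; exists [::], x, h; split.
move=> /(IH) [h1 [y [h2 [E Hy H1]]]].
exists (x :: h1), y, h2; split=> //; first by rewrite E.
by rewrite /own /=; case: ifP => // /eqP.
Qed.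

Lemma uniq_node I h : node (I, h) -> uniq (I :: map fst (own (owner I) h)).
Proof.
move: {2}(size h).+1 (ltnSn (size h)) => n; elim: n I h => [//|n IHn] I h Hs Hn.
case E0: (own (owner I) h) => [|y s]; first by [].
have /last_own [h1 [[J b] [h2 [E HJ H2]]]] : own (owner I) h != [::] by rewrite E0.
have HnJ : node (J, h1) by apply: (dnodes_prefix Hn); exact: E.
have Hs1 : (size h1 < n)%N by move: Hs; rewrite E size_cat /=; lia.
have IH := IHn J h1 Hs1 HnJ.
rewrite -E0 E own_cat own_cons_own // H2 -HJ cats1 map_rcons /=.
rewrite /= in IH; rewrite /= rcons_uniq IH andbT.
rewrite mem_rcons in_cons negb_or; apply/andP; split.
  by apply/eqP => EJ; subst J; exact: (no_repeat Hn E).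
apply/negP => /mapP [[I' b'] /=]; rewrite mem_filter => /andP [_ Hm] EI.
subst I'; have := notin_node b' Hn; rewrite E mem_cat Hm //.
Qed.

Lemma depth I h : node (I, h) -> (size (own (owner I) h) < #|Info|)%N.
Proof.
move=> /uniq_node /card_uniqP E; have := max_card (mem (I :: map fst (own (owner I) h))).
by rewrite E /= size_map.
Qed.

Notation lf := (leaf R Player Info Act).
Variable (i : Player).
Implicit Types (f : {ffun infos owner i -> Act}) (z : lf).

Lemma ownerP (J : infos owner i) : owner (val J) = i.
Proof. exact: eqP (valP J). Qed.

Lemma consistentP f h :
  reflect (forall (J : infos owner i) b, (val J, b) \in h -> f J = b) (consistent f h).
Proof.
apply: (iffP forallP) => [H J b Hm|H J].
  by move: (H J) => /forallP /(_ b) /implyP /(_ Hm) /eqP.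
by apply/forallP => b; apply/implyP => Hm; apply/eqP; exact: H.
Qed.

Lemma consistent_cat f h1 h2 :
  consistent f (h1 ++ h2) = consistent f h1 && consistent f h2.
Proof.
apply/consistentP/andP => [H|[/consistentP H1 /consistentP H2]].
  by split; apply/consistentP => J b Hm; apply: H; rewrite mem_cat Hm ?orbT.
by move=> J b; rewrite mem_cat => /orP [/H1|/H2].
Qed.

Lemma consistent_own f h : consistent f h = consistent f (own i h).
Proof.
apply/consistentP/consistentP => H J b Hm; apply: H; move: Hm;
  by rewrite mem_filter /= ownerP eqxx.
Qed.

Lemma consistent_nil f : consistent f [::].
Proof. by apply/consistentP. Qed.

Lemma consistent_cons_own f (J : infos owner i) b h :
  consistent f ((val J, b) :: h) = (f J == b) && consistent f h.
Proof.
apply/consistentP/andP => [H|[/eqP H1 /consistentP H2]].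
  split; first by apply/eqP; apply: H; rewrite mem_head.
  by apply/consistentP => J' b' Hm; apply: H; rewrite in_cons Hm orbT.
move=> J' b'; rewrite in_cons => /orP [/eqP [/val_inj -> ->] //|]; exact: H2.
Qed.

Lemma own_nilP h : reflect (own i h = [::]) (all (fun r => owner r.1 != i) h).
Proof.
elim: h => [|x h IH] /=; first by constructor.
rewrite /own /=; case: eqP => Hx /=; first by constructor.
exact: IH.
Qed.

Lemma inZ_split I z : inZ I z -> exists h1 a h2, hist z = h1 ++ (I, a) :: h2.
Proof.
case/hasP => [[I' a] Hm /= /eqP E]; subst I'.
by case/mem_split: Hm => h1 [h2 E]; exists h1, a, h2.
Qed.

Lemma inZa_inZ I a z : inZa I a z -> inZ I z.
Proof. by move=> H; apply/hasP; exists (I, a). Qed.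

Lemma PiI_leaf (I : infos owner i) f z : List.In z (leaves t) ->
  inZ (val I) z -> Piz f z -> PiI t f I.
Proof.
move=> Hz /inZ_split [h1 [a [h2 E]]] Hc.
have Hnode : node (val I, h1) by apply: (leaves_prefix Hz); exact: E.
apply/allP => -[I' h] Hn; apply/implyP => /eqP /= E1; subst I'.
have Hn' : node (val I, h) by rewrite /node -In_mem.
have := pr Hnode Hn'; rewrite ownerP => Ho.
rewrite consistent_own -Ho -consistent_own.
by move: Hc; rewrite /Piz E consistent_cat => /andP [].
Qed.

Lemma inZa_of_consistent (I : infos owner i) f z : inZ (val I) z -> Piz f z ->
  inZa (val I) (f I) z.
Proof.
move=> /inZ_split [h1 [a [h2 E]]] /consistentP H.
have Hm : (val I, a) \in hist z by rewrite E mem_cat mem_head orbT.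
by rewrite /inZa (H _ _ Hm).
Qed.

Lemma direct_afterP I a h : direct_after owner i I a h ->
  exists h1 h2, h = h1 ++ (I, a) :: h2 /\ own i h2 = [::].
Proof.
elim: h => [|q h IH] //= /orP [/andP [/eqP -> /own_nilP H]|/IH [h1 [h2 [E H]]]].
  by exists [::], h.
by exists (q :: h1), h2; rewrite E.
Qed.

Lemma direct_after_intro I a h1 h2 : own i h2 = [::] ->
  direct_after owner i I a (h1 ++ (I, a) :: h2).
Proof.
move=> /own_nilP H; elim: h1 => [|q h1 IH] /=; first by rewrite eqxx H.
by rewrite IH orbT.
Qed.

Lemma inC_witness (I J : infos owner i) a : inC t I a J ->
  exists p hw, [/\ node (val J, p ++ (val I, a) :: hw), own i hw = [::] & node (val I, p)].
Proof.
case/hasP => -[J' h] /= Hn /andP [/eqP E /direct_afterP [p [hw [Eh Hhw]]]]; subst J' h.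
have Hn' : node (val J, p ++ (val I, a) :: hw) by rewrite /node -In_mem.
exists p, hw; split=> //; apply: (dnodes_prefix Hn'); reflexivity.
Qed.

Lemma own_C (I J : infos owner i) a p hJ : inC t I a J -> node (val I, p) ->
  node (val J, hJ) -> own i hJ = rcons (own i p) (val I, a).
Proof.
case/inC_witness => p' [hw [Hw Hhw Hp']] Hp HJ.
have := pr HJ Hw; rewrite ownerP => ->.
rewrite own_cat own_cons_own /= ?ownerP // Hhw -cats1.
by have := pr Hp' Hp; rewrite ownerP => ->.
Qed.

Lemma cat_cons_lt (T : Type) (u1 u2 r1 r2 : seq T) x1 x2 :
  u1 ++ x1 :: r1 = u2 ++ x2 :: r2 -> (size u1 < size u2)%N ->
  exists m, u2 = u1 ++ x1 :: m.
Proof.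
elim: u1 u2 => [|a u1 IH] [|b u2] //=.
  by case=> -> _ _; exists u2.
by case=> -> /IH H /H [m ->]; exists m.
Qed.

Lemma cat_cons_eq (T : Type) (u1 u2 r1 r2 : seq T) x1 x2 :
  u1 ++ x1 :: r1 = u2 ++ x2 :: r2 -> size u1 = size u2 -> x1 = x2.
Proof.
elim: u1 u2 => [|a u1 IH] [|b u2] //=; first by case.
by case=> _ /IH H [] /H.
Qed.

Lemma C_inZa (I J : infos owner i) a z : inC t I a J -> List.In z (leaves t) ->
  inZ (val J) z -> inZa (val I) a z.
Proof.
move=> HC Hz /inZ_split [g1 [b [g2 E]]].
have Hg1 : node (val J, g1) by apply: (leaves_prefix Hz); exact: E.
case/inC_witness: (HC) => p [hw [_ _ Hp]].
have := own_C HC Hp Hg1 => Ho.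
have : (val I, a) \in own i g1 by rewrite Ho mem_rcons mem_head.
by rewrite mem_filter => /andP [_ Hm]; rewrite /inZa E mem_cat Hm.
Qed.

Lemma C_disjoint (I J1 J2 : infos owner i) a z : inC t I a J1 -> inC t I a J2 ->
  List.In z (leaves t) -> inZ (val J1) z -> inZ (val J2) z -> J1 = J2.
Proof.
move=> HC1 HC2 Hz /inZ_split [g1 [b1 [r1 E1]]] /inZ_split [g2 [b2 [r2 E2]]].
have Hg1 : node (val J1, g1) by apply: (leaves_prefix Hz); exact: E1.
have Hg2 : node (val J2, g2) by apply: (leaves_prefix Hz); exact: E2.
case/inC_witness: (HC1) => p [hw [_ _ Hp]].
have O1 := own_C HC1 Hp Hg1; have O2 := own_C HC2 Hp Hg2.
have E : g1 ++ (val J1, b1) :: r1 = g2 ++ (val J2, b2) :: r2 by rewrite -E1 -E2.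
case: (ltngtP (size g1) (size g2)) => Hs.
- case: (cat_cons_lt E Hs) => m Em; exfalso.
  move: O2; rewrite Em own_cat own_cons_own /= ?ownerP // O1.
  move/(congr1 size); rewrite size_cat /= size_rcons; lia.
- case: (cat_cons_lt (esym E) Hs) => m Em; exfalso.
  move: O1; rewrite Em own_cat own_cons_own /= ?ownerP // O2.
  move/(congr1 size); rewrite size_cat /= size_rcons; lia.
- by have [/val_inj] := cat_cons_eq E Hs.
Qed.

Lemma PiI_C f (I J : infos owner i) : PiI t f I -> inC t I (f I) J -> PiI t f J.
Proof.
move=> HP HC; case/inC_witness: (HC) => p [hw [_ _ Hp]].
apply/allP => -[J' h] Hn; apply/implyP => /eqP /= E1; subst J'.
have Hn' : node (val J, h) by rewrite /node -In_mem.
rewrite consistent_own (own_C HC Hp Hn') -cats1 consistent_cat.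
rewrite [consistent f [:: _]]consistent_cons_own eqxx consistent_nil andbT.
rewrite -consistent_own.
have Hp' : (val I, p) \in dnodes t by rewrite In_mem.
by move/allP: HP => /(_ _ Hp'); rewrite /= eqxx andbT.
Qed.

Lemma immediate f (I : infos owner i) z : List.In z (leaves t) -> PiI t f I ->
  inZa (val I) (f I) z ->
  ~~ [exists J, inC t I (f I) J && inZ (val J) z] -> Piz f z.
Proof.
move=> Hz HP /mem_split [h1 [h2 E]] Hno.
have Hn1 : node (val I, h1) by apply: (leaves_prefix Hz); exact: E.
rewrite /Piz E consistent_cat consistent_cons_own eqxx /=.
apply/andP; split.
  have Hp' : (val I, h1) \in dnodes t by rewrite In_mem.
  by move/allP: HP => /(_ _ Hp'); rewrite /= eqxx.
case E2 : (own i h2) => [|y s]; first by rewrite consistent_own E2 consistent_nil.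
have /first_own [m1 [[J' b'] [m2 [Em HJ' Hm1]]]] : own i h2 != [::] by rewrite E2.
exfalso; move/negP: Hno; apply; apply/existsP.
have HJ : owner J' == i by rewrite HJ'.
exists (Sub J' HJ); apply/andP; split.
  apply/hasP; exists (J', h1 ++ (val I, f I) :: m1).
    rewrite In_mem; apply: (leaves_prefix Hz (a := b') (h2 := m2)).
    by rewrite E Em -catA.
  by rewrite /= eqxx /=; apply: direct_after_intro.
by apply/hasP; exists (J', b') => //; rewrite E Em mem_cat in_cons mem_cat mem_head !orbT.
Qed.

Lemma sum_In (T : Type) (s : seq T) (F G : T -> R) :
  (forall x, List.In x s -> F x = G x) -> \sum_(x <- s) F x = \sum_(x <- s) G x.
Proof.
elim: s => [|x s IH] H; first by rewrite !big_nil.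
rewrite !big_cons H; last by left.
by rewrite IH // => y Hy; apply: H; right.
Qed.

Definition Fz (pt : jplan A) z : R := (Pimiz owner i pt z)%:R * pc z * pay z i.
Definition W (pt : jplan A) (I : infos owner i) f : R :=
  \sum_(z <- leaves t | inZ (val I) z && Piz f z) Fz pt z.

Lemma W_step pt (I : infos owner i) f : PiI t f I ->
  W pt I f = uimm t pt I (f I) + \sum_(J | inC t I (f I) J) W pt J f.
Proof.
move=> HP; rewrite /W /uimm -/(Fz pt _).
under [X in _ = _ + X]eq_bigr do rewrite big_mkcond.
rewrite exchange_big /= big_mkcond [X in _ = X + _]big_mkcond -big_split /=.
apply: sum_In => z Hz; rewrite /Fz.
case: (boolP [exists J, inC t I (f I) J && inZ (val J) z]) => HE.
- case/existsP: (HE) => J0 /andP [HC0 HZ0].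
  rewrite andbF add0r (bigD1 J0) //= HZ0 /= big1 ?addr0.
    by rewrite (inZa_inZ (C_inZa HC0 Hz HZ0)).
  move=> J /andP [HC HneJ]; case: ifP => // /andP [HZ _].
  by move: HneJ; rewrite (C_disjoint HC HC0 Hz HZ HZ0) eqxx.
- rewrite andbT big1 ?addr0; last first.
    move=> J HC; case: ifP => // /andP [HZ _]; exfalso; move/negP: HE; apply.
    by apply/existsP; exists J; rewrite HC HZ.
  case: (boolP (inZa (val I) (f I) z)) => Ha.
    by rewrite (inZa_inZ Ha) (immediate Hz HP Ha HE).
  case: ifP => // /andP [HZ HPz]; exfalso; move/negP: Ha; apply.
  exact: inZa_of_consistent.
Qed.

Lemma V_fuel pt f n (I : infos owner i) h : PiI t f I -> node (val I, h) ->
  (#|Info| <= n + size (own i h))%N -> Vfuel t n pt I f = W pt I f.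
Proof.
elim: n I h => [|n IH] I h HP Hn Hs.
  by have := depth Hn; rewrite ownerP; lia.
rewrite /= W_step //; congr (_ + _); apply: eq_bigr => J HC.
case/inC_witness: (HC) => p [hw [HJ Hhw Hp]].
apply: (IH J _ (PiI_C HP HC) HJ).
rewrite (own_C HC Hp HJ) size_rcons.
by have := pr Hp Hn; rewrite ownerP => ->; lia.
Qed.

Lemma V_W pt f (I : infos owner i) : PiI t f I -> V t pt I f = W pt I f.
Proof.
move=> HP; case/hasP: (Hne (val I)) => -[I' h] Hn /= /eqP E; subst I'.
have Hn' : node (val I, h) by rewrite /node -In_mem.
rewrite /V; apply: (V_fuel pt HP Hn'); lia.
Qed.

Lemma uniq_fst (X Y : eqType) (s : seq (X * Y)) x b b' :
  uniq (map fst s) -> (x, b) \in s -> (x, b') \in s -> b = b'.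
Proof.
elim: s => [|[x0 y0] s IH] //= /andP [Hn Hu]; rewrite !in_cons.
case/orP => [/eqP [E1 E2]|H1]; case/orP => [/eqP [E3 E4]|H2].
- by rewrite E2 E4.
- by move: Hn; rewrite -E1 (map_f fst H2).
- by move: Hn; rewrite -E3 (map_f fst H1).
- exact: IH.
Qed.

Lemma exists_PiI (I : infos owner i) : exists g : iplan owner A i, PiI t (val g) I.
Proof.
case/hasP: (Hne (val I)) => -[I' h0] Hn0 /= /eqP E; subst I'.
have Hn0' : node (val I, h0) by rewrite /node -In_mem.
have Hu : uniq (map fst (own i h0)).
  by have := uniq_node Hn0'; rewrite ownerP /= => /andP [].
have Hch : forall J : infos owner i, exists b,
    b \in A (val J) /\ forall b', (val J, b') \in h0 -> b = b'.
  move=> J; case: (boolP (has (fun q => q.1 == val J) h0)).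
  - case/hasP => -[J' b] Hm /= /eqP EJ; subst J'.
    exists b; split; first by apply: (dnodes_wf Hwf Hn0'); rewrite /= -In_mem.
    move=> b' Hm'; apply: (uniq_fst (x := val J) Hu); rewrite mem_filter /= ownerP eqxx //.
  - move=> Hnh; case/set0Pn: (HA (val J)) => b Hb; exists b; split=> // b' Hm.
    by exfalso; move/negP: Hnh; apply; apply/hasP; exists (val J, b').
have [u Pu] := fin_all_exists Hch.
have Hg : [forall J, [ffun J => u J] J \in A (val J)].
  by apply/forallP => J; rewrite ffunE; case: (Pu J).
exists (exist _ [ffun J => u J] Hg) => /=.
apply/allP => -[I' h] Hn; apply/implyP => /eqP /= E1; subst I'.
have Hn' : node (val I, h) by rewrite /node -In_mem.
have := pr Hn' Hn0'; rewrite ownerP => Ho.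
rewrite consistent_own Ho -consistent_own.
apply/consistentP => J b Hm; rewrite ffunE; case: (Pu J) => _; exact.
Qed.

Lemma natr_andb (a b : bool) : (a && b)%:R = a%:R * b%:R :> R.
Proof. by case: a; case: b; rewrite ?mul1r ?mul0r. Qed.

Lemma sum_condS (X : Type) (s : seq X) (P : pred X) (F : X -> R) :
  \sum_(x <- s | P x) F x = \sum_(x <- s) (P x)%:R * F x.
Proof. by rewrite big_mkcond; apply: eq_bigr => x _; case: (P x); rewrite ?mul1r ?mul0r. Qed.

Variables (T : nat) (pi : 'I_T -> jplan A).

Lemma sum_emp (P : pred (jplan A)) :
  \sum_(p | P p) empfreq R pi p = (\sum_(s < T) (P (pi s))%:R) / T%:R.
Proof.
rewrite /empfreq; under eq_bigr do rewrite ffunE; rewrite -mulr_suml; congr (_ * _).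
symmetry; transitivity (\sum_(s < T | P (pi s)) (1 : R)).
  by rewrite [RHS]big_mkcond; apply: eq_bigr => s _; case: (P (pi s)).
rewrite (partition_big pi P) //=; apply: eq_bigr => p Pp.
rewrite -sum1_card natr_sum; apply: eq_bigl => s; apply/idP/idP.
  by case/andP => _ /eqP E; rewrite classical_sets.in_setE /= E.
by rewrite classical_sets.in_setE /= => /eqP E; rewrite E Pp eqxx.
Qed.

Lemma Pijz_split (p : jplan A) z : Pijz p z = Pimiz owner i p z && Piz (restr owner i p) z.
Proof.
apply/forallP/andP => [H|[/forallP H1 /consistentP H2] J].
  split.
    apply/forallP => J; apply/forallP => b; apply/implyP => /andP [_ Hm].
    by move/forallP: (H J) => /(_ b) /implyP /(_ Hm).
  apply/consistentP => J b Hm; rewrite ffunE.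
  by apply/eqP; move/forallP: (H (val J)) => /(_ b) /implyP /(_ Hm).
apply/forallP => b; apply/implyP => Hm.
case: (eqVneq (owner J) i) => HJ.
  by have := H2 (Sub J (introT eqP HJ)) b Hm; rewrite ffunE /= => ->.
by move/forallP: (H1 J) => /(_ b) /implyP; apply; rewrite HJ.
Qed.

Lemma dev_first (I : infos owner i) a (mh : {ffun iplan owner A i -> R}) :
  \sum_(z <- leaves t | inZ (val I) z) p_sig t (empfreq R pi) I a mh z * pay z i
  = T%:R^-1 * \sum_(s < T) (Pisig t (restr owner i (pi s)) I a)%:R *
      \sum_g mh g * W (pi s) I (val g).
Proof.
pose G (s : 'I_T) (g : iplan owner A i) (z : lf) : R :=
  T%:R^-1 * (inZ (val I) z)%:R * (Pisig t (restr owner i (pi s)) I a)%:R *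
  (Pimiz owner i (pi s) z)%:R * (Piz (val g) z)%:R * mh g * pc z * pay z i.
transitivity (\sum_(z <- leaves t) \sum_(s < T) \sum_g G s g z).
  rewrite sum_condS; apply: eq_bigr => z _; rewrite /p_sig sum_emp.
  have -> : \sum_(g | Piz (val g) z) mh g = \sum_g (Piz (val g) z)%:R * mh g.
    by rewrite big_mkcond; apply: eq_bigr => g _; case: ifP; rewrite ?mul1r ?mul0r.
  set X := \sum_(s < T) _; set Y := \sum_g _.
  transitivity ((X * Y) * (T%:R^-1 * (inZ (val I) z)%:R * pc z * pay z i)).
    by ring.
  rewrite -mulrA mulr_suml; apply: eq_bigr => s _.
  rewrite mulr_suml mulr_sumr; apply: eq_bigr => g _; rewrite /G natr_andb; ring.
rewrite exchange_big; transitivity (\sum_(s < T) \sum_g \sum_(z <- leaves t) G s g z).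
  by apply: eq_bigr => s _; rewrite exchange_big.
rewrite mulr_sumr; apply: eq_bigr => s _.
rewrite mulrA mulr_sumr; apply: eq_bigr => g _.
rewrite /W [X in _ = _ * (_ * X)]sum_condS mulr_sumr mulr_sumr; apply: eq_bigr => z _.
rewrite /G /Fz natr_andb; ring.
Qed.

Lemma key_bool (I : infos owner i) a f z : List.In z (leaves t) ->
  inZa (val I) a z && Piz f z = Pisig t f I a && inZ (val I) z && Piz f z.
Proof.
move=> Hz; case Hp: (Piz f z); rewrite ?andbF // !andbT.
apply/idP/idP => [Ha|/andP [/andP [_ /eqP <-] HZ]]; last exact: inZa_of_consistent.
have HZ := inZa_inZ Ha; rewrite HZ andbT /Pisig (PiI_leaf Hz HZ Hp) /=.
by move/consistentP: Hp => /(_ I a Ha) ->.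
Qed.

Lemma dev_second (I : infos owner i) a :
  \sum_(z <- leaves t | inZa (val I) a z) q_mu (empfreq R pi) z * pay z i
  = T%:R^-1 * \sum_(s < T) (Pisig t (restr owner i (pi s)) I a)%:R *
      W (pi s) I (restr owner i (pi s)).
Proof.
pose H (s : 'I_T) (z : lf) : R :=
  T%:R^-1 * (inZa (val I) a z)%:R * (Pijz (pi s) z)%:R * pc z * pay z i.
transitivity (\sum_(z <- leaves t) \sum_(s < T) H s z).
  rewrite sum_condS; apply: eq_bigr => z _; rewrite /q_mu sum_emp.
  set X := \sum_(s < T) _.
  transitivity (X * (T%:R^-1 * (inZa (val I) a z)%:R * pc z * pay z i)).
    by ring.
  by rewrite mulr_suml; apply: eq_bigr => s _; rewrite /H; ring.
rewrite exchange_big mulr_sumr; apply: eq_bigr => s _.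
rewrite /W [X in _ = _ * (_ * X)]sum_condS mulr_sumr mulr_sumr.
apply: sum_In => z Hz; rewrite /H /Fz Pijz_split !natr_andb.
have E := congr1 (fun b : bool => b%:R : R) (key_bool I a (restr owner i (pi s)) Hz).
rewrite /= !natr_andb in E.
transitivity (T%:R^-1 * ((inZa (val I) a z)%:R * (Piz (restr owner i (pi s)) z)%:R) *
  (Pimiz owner i (pi s) z)%:R * pc z * pay z i); first by ring.
rewrite E; ring.
Qed.

Definition Dg (I : infos owner i) a (g : {ffun infos owner i -> Act}) : R :=
  \sum_(s < T) (Pisig t (restr owner i (pi s)) I a)%:R *
    (V t (pi s) I g - V t (pi s) I (restr owner i (pi s))).

Lemma dev_eq (I : infos owner i) a (mh : {ffun iplan owner A i -> R}) :
  is_idist t I mh ->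
  deviation t (empfreq R pi) I a mh = T%:R^-1 * \sum_g mh g * Dg I a (val g).
Proof.
move=> [[_ Hsum] Hsupp]; rewrite /deviation dev_first dev_second -mulrBr.
congr (_ * _); rewrite -sumrB.
under [RHS]eq_bigr do rewrite /Dg mulr_sumr.
rewrite [RHS]exchange_big; apply: eq_bigr => s _.
set Ps := (Pisig t (restr owner i (pi s)) I a)%:R.
transitivity (\sum_g mh g * (Ps * (W (pi s) I (val g) - W (pi s) I (restr owner i (pi s))))).
  transitivity (Ps * (\sum_g mh g * W (pi s) I (val g)) -
                Ps * W (pi s) I (restr owner i (pi s)) * \sum_g mh g).
    by rewrite Hsum mulr1.
  rewrite [Ps * _]mulr_sumr [_ * \sum_g mh g]mulr_sumr -sumrB.
  by apply: eq_bigr => g _; ring.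
apply: eq_bigr => g _; case: (eqVneq (mh g) 0) => [->|Hg]; first by rewrite !mul0r.
rewrite (V_W _ (Hsupp g Hg)); congr (_ * _); rewrite /Ps.
case HPs: (Pisig t (restr owner i (pi s)) I a); last by rewrite !mul0r.
by case/andP: HPs => HP _; rewrite (V_W _ HP).
Qed.

Lemma fin_max (X : finType) (F : X -> R) (P : pred X) x0 : P x0 ->
  exists x, P x /\ forall y, P y -> F y <= F x.
Proof.
move=> Px0.
suff: forall s : seq X, exists x, P x /\ forall y, y \in s -> P y -> F y <= F x.
  by case/(_ (enum X)) => x [Px H]; exists x; split=> // y; apply: H; rewrite mem_enum.
elim=> [|y s [x [Px H]]]; first by exists x0.
case: (boolP (P y)) => Py.
  case: (lerP (F y) (F x)) => Hyx.
    by exists x; split=> // z; rewrite in_cons => /orP [/eqP ->|]; [|apply: H].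
  exists y; split=> // z; rewrite in_cons => /orP [/eqP ->//|Hz Pz].
  by apply: le_trans (H z Hz Pz) (ltW Hyx).
by exists x; split=> // z; rewrite in_cons => /orP [/eqP ->|]; [rewrite (negbTE Py)|apply: H].
Qed.

Lemma sup_eq_max (E : classical_sets.set R) x : E x -> (forall y, E y -> y <= x) -> sup E = x.
Proof.
move=> Ex Hub; apply/eqP; rewrite eq_le; apply/andP; split.
  by apply: ge_sup; [exists x|].
by apply: ub_le_sup => //; exists x.
Qed.

Lemma regret_max (I : infos owner i) a : exists gs : iplan owner A i,
  [/\ PiI t (val gs) I, regret t pi I a = Dg I a (val gs) &
      forall g : iplan owner A i, PiI t (val g) I -> Dg I a (val g) <= Dg I a (val gs)].
Proof.
have [g0 Hg0] := exists_PiI I.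
have [gs [Hgs Hmax]] := fin_max (fun g : iplan owner A i => Dg I a (val g))
  (P := fun g : iplan owner A i => PiI t (val g) I) Hg0.
exists gs; split=> //; apply: sup_eq_max; first by exists gs.
by move=> y [g [Hg ->]]; apply: Hmax.
Qed.

Lemma dev_le (I : infos owner i) a (mh : {ffun iplan owner A i -> R}) :
  is_idist t I mh -> deviation t (empfreq R pi) I a mh <= regret t pi I a / T%:R.
Proof.
move=> Hid; rewrite (dev_eq a Hid) mulrC.
have [gs [Hgs -> Hmax]] := regret_max I a.
apply: ler_wpM2r; first by rewrite invr_ge0 ler0n.
case: Hid => [[Hpos Hsum] Hsupp].
rewrite -[leRHS]mul1r -Hsum mulr_suml; apply: ler_sum => g _.
case: (eqVneq (mh g) 0) => [->|Hg]; first by rewrite !mul0r.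
by apply: ler_wpM2l => //; apply: Hmax; apply: Hsupp.
Qed.

Lemma dev_attain (I : infos owner i) a : exists mh : {ffun iplan owner A i -> R},
  is_idist t I mh /\ deviation t (empfreq R pi) I a mh = regret t pi I a / T%:R.
Proof.
have [gs [Hgs -> Hmax]] := regret_max I a.
pose mh : {ffun iplan owner A i -> R} := [ffun g => (g == gs)%:R].
have Hid : is_idist t I mh.
  split; first split.
  - by move=> g; rewrite /mh ffunE ler0n.
  - rewrite (bigD1 gs) //= /mh ffunE eqxx big1 ?addr0 // => g /negbTE.
    by rewrite ffunE => ->.
  - by move=> g; rewrite /mh ffunE; case: (eqVneq g gs) => [-> //|_]; rewrite eqxx.
exists mh; split=> //; rewrite (dev_eq a Hid) mulrC; congr (_ * _).
rewrite (bigD1 gs) //= ffunE eqxx mul1r big1 ?addr0 // => g /negbTE.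
by rewrite ffunE => ->; rewrite mul0r.
Qed.
End PR.
Unset Implicit Arguments.

Theorem theorem1 (R : realType) (Player Info Act : finType)
  (owner : Info -> Player) (A : Info -> {set Act})
  (t : gtree Player Info Act R)
  (HA : forall I, A I != set0)
  (Hwf : wf_tree A t)
  (Hne : infosets_nonempty t)
  (Hpr : perfect_recall owner t)
  (T : nat) (HT : (0 < T)%N) (pi : 'I_T -> jplan A) :
  let eps := max_avg_regret owner t pi in
  delta owner t (empfreq R pi) = eps /\
  (forall (i : Player) (I : infos owner i) (a : Act)
          (mh : {ffun iplan owner A i -> R}),
     a \in A (val I) -> is_idist t I mh ->
     \sum_(z <- leaves t | inZa (val I) a z) q_mu (empfreq R pi) z * pay z i
     >= \sum_(z <- leaves t | inZ (val I) z) p_sig t (empfreq R pi) I a mh z * pay z i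
        - eps).
Proof.
move=> eps.
have Hle := fun i (I : infos owner i) a mh (H : is_idist t I mh) =>
  dev_le HA Hwf Hne Hpr pi a H.
have Hat := fun i (I : infos owner i) a => dev_attain HA Hwf Hne Hpr pi I a.
pose F (x : {i : Player & infos owner i} * Act) : R :=
  regret t pi (tagged x.1) x.2 / T%:R.
pose P (x : {i : Player & infos owner i} * Act) := x.2 \in A (val (tagged x.1)).
case: (pickP P) => [x0 Px0|HnoP].
- have [xm [Pxm Hmax]] := fin_max F Px0.
  have HepsM : eps = F xm.
    rewrite /eps /max_avg_regret; apply: sup_eq_max.
      by exists (tag xm.1), (tagged xm.1), xm.2.
    by move=> y [i [I [a [Ha ->]]]]; exact: (Hmax (Tagged _ I, a) Ha).
  split.
  + rewrite HepsM /delta; apply: sup_eq_max.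
      have [mh [Hid Hdev]] := Hat _ (tagged xm.1) xm.2.
      by exists (tag xm.1), (tagged xm.1), xm.2, mh; split.
    move=> y [i [I [a [mh [Ha Hid ->]]]]].
    exact: le_trans (Hle _ _ _ _ Hid) (Hmax (Tagged _ I, a) Ha).
  + move=> i I a mh Ha Hid.
    have H1 := Hle _ _ a _ Hid; have H2 := Hmax (Tagged _ I, a) Ha.
    rewrite /deviation in H1; rewrite HepsM; rewrite /F /= in H2 *; lra.
- split.
  + rewrite /delta /eps /max_avg_regret; congr sup.
    apply: boolp.funext => x; apply: boolp.propext; split.
      by move=> [i [I [a [mh [Ha _ _]]]]]; move: (HnoP (Tagged _ I, a)); rewrite /P /= Ha.
    by move=> [i [I [a [Ha _]]]]; move: (HnoP (Tagged _ I, a)); rewrite /P /= Ha.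
  + by move=> i I a mh Ha; move: (HnoP (Tagged _ I, a)); rewrite /P /= Ha.
Qed.
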